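(* Let $s\ge1$ and let $\vec M=(M_1,\dots,M_n)$ be positive integers with $2M_i+1\equiv0\pmod{p^s}$ for all $i$. Then for all positive integers $l$ and $t$ with $t\le s$, the vector $I^{[lp^t-1]}(z,\vec M)\in\mathbb Z[z]^n$ is a solution of the KZ system modulo $p^t$.
   Context: Let $p$ be an odd prime, $g\ge1$, $n=2g+1$, with $p>n$. Write $z=(z_1,\dots,z_n)$. For $1\le i\ne j\le n$ let $\Omega_{ij}$ be the $n\times n$ matrix whose $(i,i)$ and $(j,j)$ entries are $-1$, whose $(i,j)$ and $(j,i)$ entries are $1$, and all of whose other entries are $0$. The KZ system is the system for a column vector $I=(I_1,\dots,I_n)$ of functions of $z$: $\frac{\partial I}{\partial z_i}=\frac12\sum_{j\ne i}\frac{\Omega_{ij}}{z_i-z_j}\,I$ for $i=1,\dots,n$, together with $I_1+\dots+I_n=0$. For a positive integer $s$ let $\pi_s$ denote reduction modulo $p^s$. A vector $I(z)\in\mathbb Z[z]^n$ is a solution of the KZ system modulo $p^s$ if $\pi_s I\in(\mathbb Z/p^s\mathbb Z)[z]^n$ satisfies the KZ system (the differential equations being understood in $(\mathbb Z/p^s\mathbb Z)[z]$ after multiplying the $i$-th equation by $\prod_{j\ne i}(z_i-z_j)$). For $\vec M=(M_1,\dots,M_n)$ put $\Phi(x,z,\vec M)=\prod_{i=1}^n(x-z_i)^{M_i}$, expand $\Big(\frac{\Phi(x,z,\vec M)}{x-z_1},\dots,\frac{\Phi(x,z,\vec M)}{x-z_n}\Big)=\sum_i P^i(z,\vec M)x^i$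 with $P^i(z,\vec M)\in\mathbb Z[z]^n$, and set $I^{[m-1]}(z,\vec M)=P^{m-1}(z,\vec M)$ for positive integers $m$. *)

(* Defs.v *)
From HB Require Import structures.
From mathcomp Require Import all_boot all_order all_algebra.
From mathcomp Require Import mpoly.
Set Implicit Arguments. Unset Strict Implicit. Unset Printing Implicit Defensive.
Import Order.TTheory GRing.Theory Num.Theory.
Local Open Scope ring_scope.

Definition Omega (n : nat) (i j : 'I_n) : 'M[int]_n :=
  \matrix_(k < n, l < n)
    (if ((k == i) && (l == i)) || ((k == j) && (l == j)) then -1
     else if ((k == i) && (l == j)) || ((k == j) && (l == i)) then 1
     else 0).

Definition Phi (n : nat) (M : 'I_n -> nat) : {poly {mpoly int[n]}} :=
  \prod_(k < n) ('X - ('X_k)%:P) ^+ M k.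

(* Phi(x,z,M)/(x - z_j), written out (valid since M_j >= 1). *)
Definition Phi_over (n : nat) (M : 'I_n -> nat) (j : 'I_n) :
    {poly {mpoly int[n]}} :=
  ('X - ('X_j)%:P) ^+ (M j).-1 * \prod_(k < n | k != j) ('X - ('X_k)%:P) ^+ M k.

(* I^{[k]}(z,M) = P^k(z,M): j-th component is the coefficient of x^k in
   Phi/(x - z_j). *)
Definition Ivec (n : nat) (k : nat) (M : 'I_n -> nat) : 'I_n -> {mpoly int[n]} :=
  fun j => (Phi_over M j)`_k.

Definition red_mod (q n : nat) (P : {mpoly int[n]}) : {mpoly 'Z_q[n]} :=
  map_mpoly (fun c : int => (c%:~R : 'Z_q)) P.

(* I is a solution of the KZ system modulo q: pi_q I satisfies
   I_1 + ... + I_n = 0 and, for every i, the i-th equation multiplied by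
   prod_{j<>i} (z_i - z_j), in (Z/qZ)[z]. *)
Definition KZ_solution_mod (q n : nat) (I : 'I_n -> {mpoly int[n]}) : Prop :=
  let J := fun k => red_mod q (I k) in
  (\sum_(k < n) J k = 0) /\
  forall i k : 'I_n,
    (\prod_(j < n | j != i) ('X_i - 'X_j)) * mderiv i (J k) =
    ((2%:R : 'Z_q)^-1) *:
      \sum_(j < n | j != i)
        (\prod_(l < n | (l != i) && (l != j)) ('X_i - 'X_l)) *
        \sum_(m < n) (((Omega i j k m)%:~R : 'Z_q) *: J m).

(* Main.v *)
Require Import Defs.
From HB Require Import structures.
From mathcomp Require Import all_boot all_order all_algebra.
From mathcomp Require Import mpoly.
From mathcomp Require Import ring.
Import GRing.Theory.
Local Open Scope ring_scope.

Section Der.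
Variable T : comNzRingType.
Variable d : T -> T.
Hypothesis dM : forall x y, d (x * y) = d x * y + x * d y.

Lemma d1 : d 1 = 0.
Proof.
have := dM 1 1; rewrite !mul1r mulr1.
by rewrite -{1}[d 1]addr0 => /addrI /esym.
Qed.

Lemma d_exp x m : d (x ^+ m) = (x ^+ m.-1 * d x) *+ m.
Proof.
elim: m => [|m IH]; first by rewrite expr0 d1.
case: m IH => [|m] IH; first by rewrite expr1 expr0 mul1r.
by rewrite exprS dM IH mulrnAr mulrA -exprS (mulrC (d x)) -mulrS.
Qed.

Lemma d_prod (I : eqType) (s : seq I) (g : I -> T) : uniq s ->
  d (\prod_(k <- s) g k) = \sum_(j <- s) d (g j) * \prod_(k <- s | k != j) g k.
Proof.
elim: s => [|x s IH]; first by rewrite !big_nil d1.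
rewrite /= => /andP [xs us].
rewrite !big_cons dM IH // eqxx /=.
congr (_ + _).
  congr (_ * _); symmetry; apply: big_rmcond_in => i ix; rewrite negbK => /eqP E; by rewrite -E ix in xs.
rewrite mulr_sumr; apply: eq_big_seq => j js; rewrite big_cons.
have -> : (x != j) by apply/eqP => E; rewrite E js in xs.
by rewrite mulrCA.
Qed.

End Der.

Lemma omega_sum (R : comUnitRingType) n i j k (V : 'I_n -> {mpoly R[n]}) : j != i ->
  \sum_(m < n) (((Omega i j k m)%:~R : R) *: V m) =
  if k == i then V j - V i else if k == j then V i - V j else 0.
Proof.
move=> ji.
have sd : forall c, \sum_(m < n) ((m == c)%:R : R) *: V m = V c.
  move=> c; rewrite (bigD1 c) //= eqxx scale1r big1 ?addr0 // => m /negbTE ->.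
  by rewrite scale0r.
have ij : (i == j) = false by rewrite eq_sym; apply/negbTE.
have ji' : (j == i) = false by apply/negbTE.
have E : forall m, ((Omega i j k m)%:~R : R) = if k == i then (m == j)%:R - (m == i)%:R
   else if k == j then (m == i)%:R - (m == j)%:R else 0.
  move=> m; rewrite /Omega mxE.
  case: (eqVneq k i) => [ki|ki]; case: (eqVneq k j) => [kj|kj];
  case: (eqVneq m i) => [mi|mi]; case: (eqVneq m j) => [mj|mj] => //=;
  try (subst; by rewrite eqxx in ji); by rewrite ?sub0r ?subr0 ?oppr0 ?mulr0z.
under eq_bigr => m _ do rewrite E.
case: (eqVneq k i) => [_|ki].
  by rewrite (eq_bigr (fun m => ((m == j)%:R : R) *: V m - ((m == i)%:R : R) *: V m))
    ?sumrB ?sd // => m _; rewrite scalerBl.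
case: (eqVneq k j) => [_|kj].
  by rewrite (eq_bigr (fun m => ((m == i)%:R : R) *: V m - ((m == j)%:R : R) *: V m))
    ?sumrB ?sd // => m _; rewrite scalerBl.
by rewrite big1 // => m _; rewrite scale0r.
Qed.

Set Implicit Arguments. Unset Strict Implicit.

Section Core.
Variables (R : comUnitRingType) (n : nat).
Local Notation A := {mpoly R[n]}.
Definition L (k : 'I_n) : {poly A} := 'X - ('X_k)%:P.
Definition Pi (e : 'I_n -> nat) : {poly A} := \prod_(k < n) L k ^+ e k.
Definition dec (e : 'I_n -> nat) (j : 'I_n) : 'I_n -> nat := fun k => (e k - (k == j))%N.
Definition D (i : 'I_n) := map_poly (@mderiv n R i).

Lemma Pi_eq e e' : (forall k, e k = e' k) -> Pi e = Pi e'.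
Proof. by move=> E; apply: eq_bigr => k _; rewrite E. Qed.

Lemma Pi_dec e j : (0 < e j)%N -> L j * Pi (dec e j) = Pi e.
Proof.
move=> ej; rewrite /Pi (bigD1 j) //= [RHS](bigD1 j) //= /dec eqxx subn1 mulrA -exprS prednK //.
by congr (_ * _); apply: eq_bigr => k /negbTE ->; rewrite subn0.
Qed.

Lemma dec_comm e i j : Pi (dec (dec e i) j) = Pi (dec (dec e j) i).
Proof. by apply: Pi_eq => k; rewrite /dec subnAC. Qed.

Lemma Pi_der (d : {poly A} -> {poly A})
  (dM : forall x y, d (x * y) = d x * y + x * d y) e :
  d (Pi e) = \sum_j (d (L j) * Pi (dec e j)) *+ e j.
Proof.
rewrite /Pi d_prod ?index_enum_uniq //; apply: eq_bigr => j _.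
rewrite d_exp // (bigD1 j (P := predT)) //= /dec eqxx subn1.
rewrite [X in _ = _ * (_ * X) *+ _](_ : _ = \prod_(k < n | k != j) L k ^+ e k); last first.
  by apply: eq_bigr => k /negbTE ->; rewrite subn0.
by rewrite !mulrnAl -mulrA [in RHS]mulrCA.
Qed.

Lemma DM i x y : D i (x * y) = D i x * y + x * D i y.
Proof.
apply/polyP => m; rewrite coefD /D coef_map /= !coefM raddf_sum -big_split /=.
apply: eq_bigr => j _; by rewrite mderivM !coef_map.
Qed.

Lemma mderivXk i k : mderiv i ('X_k : A) = (k == i)%:R.
Proof.
rewrite mderivX mnm1E; case: eqP => [->|_]; last by rewrite scale0r.
have -> : (U_(i) - U_(i))%MM = 0%MM by apply/mnmP => l; rewrite mnmBE mnm0E subnn.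
by rewrite mpolyX0 scale1r.
Qed.

Lemma DL i k : D i (L k) = - ((k == i)%:R)%:P.
Proof.
apply/polyP => m; rewrite /D coef_map /= /L !coefB coefX !coefC coefN coefC.
case: m => [|[|m]] /=.
- by rewrite mderivB mderivXk mderiv0 sub0r.
- by rewrite mderivB mderiv0 subr0 -mpolyC1 mderivC oppr0.
- by rewrite mderivB !mderiv0 subr0 oppr0.
Qed.

Lemma D_Pi i e : D i (Pi e) = - (Pi (dec e i) *+ e i).
Proof.
rewrite (@Pi_der (D i) (DM i)).
rewrite (bigD1 i) //= big1 ?addr0; last first.
  by move=> j /negbTE ji; rewrite DL ji polyC0 oppr0 mul0r mul0rn.
by rewrite DL eqxx polyC1 mulN1r mulNrn.
Qed.

Lemma deriv_Pi e : deriv (Pi e) = \sum_j Pi (dec e j) *+ e j.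
Proof.
rewrite (@Pi_der deriv (@derivM _)).
by apply: eq_bigr => j _; rewrite /L derivXsubC mul1r.
Qed.

End Core.

Lemma negV (V : zmodType) (y : V) m : y *+ (2 * m + 1) = 0 -> -(y *+ (2 * m)) = y.
Proof. by rewrite mulrnDr mulr1n => /eqP; rewrite addr_eq0 => /eqP ->; rewrite opprK. Qed.

Section KZ.
Variables (R : comUnitRingType) (n : nat) (a : 'I_n -> nat) (N : nat).
Hypothesis ha : forall k, (2 * a k + 1)%:R = 0 :> R.
Hypothesis hN : (N.+1)%:R = 0 :> R.
Hypothesis h2 : (2%:R : R) \is a GRing.unit.
Hypothesis apos : forall k, (0 < a k)%N.
Local Notation A := {mpoly R[n]}.
Local Notation Pi := (@Pi R n).
Local Notation L := (@L R n).
Local Notation D := (@D R n).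
Local Notation dec := (@dec n).
Definition J (k : 'I_n) : A := (Pi (dec a k))`_N.

Lemma natA0 m : (m%:R : R) = 0 -> forall y : A, y *+ m = 0.
Proof.
move=> hm y; apply/mpolyP => mm; by rewrite mcoeffMn mcoeff0 -mulr_natr hm mulr0.
Qed.

Lemma natP0 m : (m%:R : R) = 0 -> forall x : {poly A}, x *+ m = 0.
Proof. by move=> hm x; apply/polyP => k; rewrite coefMn coef0 natA0. Qed.

Lemma negA (y : A) k : -(y *+ (2 * a k)) = y.
Proof. by apply: negV; rewrite natA0. Qed.

Lemma negP (y : {poly A}) k : -(y *+ (2 * a k)) = y.
Proof. by apply: negV; rewrite natP0. Qed.

Lemma half (y : A) k : (2%:R : R)^-1 *: y = -(y *+ a k).
Proof.
rewrite -{1}(negA y k) mulnC mulrnA -mulNrn.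
by rewrite -scalerMnr scalerMnl -mulr_natr mulVr // scale1r.
Qed.

Lemma kz_sum : \sum_(k < n) J k = 0.
Proof.
have E : \sum_(k < n) Pi (dec a k) = - (deriv (Pi a) *+ 2).
  rewrite deriv_Pi -sumrMnl -sumrN; apply: eq_bigr => k _.
  by rewrite -mulrnA mulnC negP.
by rewrite /J -coef_sum E coefN coefMn coef_deriv (@natA0 _ hN) mul0rn oppr0.
Qed.

Definition Pz (i : 'I_n) : A := \prod_(j < n | j != i) ('X_i - 'X_j).
Definition Qz (i j : 'I_n) : A := \prod_(l < n | (l != i) && (l != j)) ('X_i - 'X_l).
Definition H (i j : 'I_n) := Pi (dec (dec a i) j).

Lemma P_split i j : j != i -> Pz i = ('X_i - 'X_j) * Qz i j.
Proof. by move=> ji; rewrite /Pz (bigD1 j). Qed.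

Lemma LsubL i j : L j - L i = (('X_i : A) - 'X_j)%:P.
Proof. rewrite /L polyCB; ring. Qed.

Lemma FH1 i j : j != i -> Pi (dec a j) = L i * H i j.
Proof.
move=> ji; rewrite /H dec_comm Pi_dec // /dec.
by rewrite eq_sym (negbTE ji) subn0.
Qed.

Lemma FH2 i j : j != i -> Pi (dec a i) = L j * H i j.
Proof. by move=> ji; rewrite /H Pi_dec // /dec (negbTE ji) subn0. Qed.

Lemma Jdiff i j : j != i -> J i - J j = ('X_i - 'X_j) * (H i j)`_N.
Proof. by move=> ji; rewrite /J -coefB (FH1 ji) (FH2 ji) -mulrBl LsubL coefCM. Qed.

Lemma mderivJ i k : mderiv i (J k) = (- (Pi (dec (dec a k) i) *+ (dec a k i)))`_N.
Proof. by rewrite /J -(coef_map (mderiv i)) -/(D i _) D_Pi. Qed.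

Lemma kz_ne i k : k != i ->
  Pz i * mderiv i (J k) = (2%:R : R)^-1 *:
    \sum_(j < n | j != i) Qz i j * \sum_(m < n) (((Omega i j k m)%:~R : R) *: J m).
Proof.
move=> ki.
under eq_bigr => j ji do rewrite (omega_sum _ _ _ _ _ J ji) (negbTE ki).
rewrite (bigD1 k) //= eqxx big1 ?addr0; last first.
  by move=> j /andP [_ jk]; rewrite eq_sym (negbTE jk) mulr0.
rewrite (P_split ki) (half _ i) mderivJ -dec_comm -/(H i k) /dec (Jdiff ki).
rewrite eq_sym (negbTE ki) subn0 coefN coefMn.
by rewrite mulrN mulrnAr [in RHS]mulrCA mulrA.
Qed.

Lemma kz_i i :
  Pz i * mderiv i (J i) = (2%:R : R)^-1 *:
    \sum_(j < n | j != i) Qz i j * \sum_(m < n) (((Omega i j i m)%:~R : R) *: J m).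
Proof.
under eq_bigr => j ji do rewrite (omega_sum _ _ _ _ _ J ji) eqxx.
have key : - ((H i i)`_N *+ (a i - 1)) = \sum_(j < n | j != i) (H i j)`_N *+ a j.
  have := congr1 (fun p : {poly A} => p`_N) (deriv_Pi R (dec a i)).
  rewrite /= coef_deriv (@natA0 _ hN) coef_sum (bigD1 i) //= => /eqP.
  rewrite eq_sym addr_eq0 coefMn => /eqP E.
  have -> : (a i - 1)%N = dec a i i by rewrite /dec eqxx.
  rewrite /H E opprK; apply: eq_bigr => j /negbTE ji.
  by rewrite coefMn /dec ji subn0.
rewrite mderivJ coefN coefMn -/(H i i).
have -> : dec a i i = (a i - 1)%N by rewrite /dec eqxx.
rewrite key.
rewrite mulr_sumr scaler_sumr; apply: eq_bigr => j ji.
rewrite (half _ j) -opprB (Jdiff ji) mulrN mulrCA mulrA -(P_split ji) mulNrn opprK.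
by rewrite mulrnAr.
Qed.

End KZ.

Lemma red_J (q n N : nat) (M : 'I_n -> nat) k :
  red_mod q (Ivec N M k) = @J 'Z_q n M N k.
Proof.
rewrite /red_mod /Ivec /J -(coef_map (map_mpoly (fun c : int => (c%:~R : 'Z_q)))).
apply: (congr1 (fun p : {poly {mpoly 'Z_q[n]}} => p`_N)).
rewrite /Phi_over rmorphM rmorphXn rmorph_prod /= map_polyXsubC /= map_mpolyX.
rewrite /Pi [RHS](bigD1 k) //= /dec eqxx subn1; congr (_ * _).
apply: eq_bigr => j /negbTE jk; rewrite jk subn0 rmorphXn /= map_polyXsubC /= map_mpolyX //.
Qed.

Theorem theorem5p1 (p g n s : nat) (M : 'I_n -> nat) :
  prime p -> odd p -> (1 <= g)%N -> n = (2 * g + 1)%N -> (n < p)%N ->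
  (1 <= s)%N ->
  (forall i, 0 < M i)%N ->
  (forall i, p ^ s %| 2 * M i + 1)%N ->
  forall l t : nat, (0 < l)%N -> (0 < t)%N -> (t <= s)%N ->
    KZ_solution_mod (p ^ t) (Ivec (l * p ^ t - 1) M).
Proof.
move=> pp op _ _ _ _ Mpos Mdiv l t lpos tpos ts.
have q1 : (1 < p ^ t)%N.
  apply: (leq_trans (prime_gt1 pp)); rewrite -{1}(expn1 p).
  exact: leq_pexp2l (prime_gt0 pp) tpos.
have q0 : ((p ^ t)%:R : 'Z_(p ^ t)) = 0 by exact: pchar_Zp.
have ha : forall k, ((2 * M k + 1)%:R : 'Z_(p ^ t)) = 0.
  move=> k; have /dvdnP [c ->] := dvdn_trans (dvdn_exp2l p ts) (Mdiv k).
  by rewrite natrM q0 mulr0.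
have hN : ((l * p ^ t - 1).+1%:R : 'Z_(p ^ t)) = 0.
  rewrite subn1 prednK ?muln_gt0 ?lpos ?expn_gt0 ?prime_gt0 //.
  by rewrite natrM q0 mulr0.
have h2 : ((2%:R : 'Z_(p ^ t)) \is a GRing.unit).
  by rewrite unitZpE // coprimen2 oddX op orbT.
rewrite /KZ_solution_mod; split.
  rewrite (eq_bigr (fun k => @J _ n M (l * p ^ t - 1) k)); last by move=> k _; exact: red_J.
  exact: kz_sum.
move=> i k; rewrite red_J.
under [in RHS]eq_bigr => j _ do under [X in _ * X]eq_bigr => m _ do rewrite red_J.
case: (eqVneq k i) => [->|ki].
  exact: kz_i.
exact: kz_ne.
Qed.
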